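(* Let $X_0,X_1,\ldots$ be an irreducible and aperiodic discrete-time Markov chain on a finite state space $\Omega$ with stationary distribution $\pi$. Let $x\in\Omega$ be a state and $\mathcal C\subset\Omega$ a subset such that, for an initial state $x_0\in\Omega$, $$P\{\tau_x<\tau_{\mathcal C}\mid X_0=x_0\}\ge c$$ for some constant $c$. Let $\mathcal B\subset\Omega$ be a subset such that every path from $x$ to $\mathcal C$ intersects $\mathcal B$. Then $$E\{\tau_{\mathcal C}\mid X_0=x_0\}\ge\frac{c\,\pi(x)}{\pi(\mathcal B)}.$$
   Context: For $A\subset\Omega$ (or a single state), $\tau_A=\min\{t\ge0:X_t\in A\}$. A path is a sequence of states in which each consecutive pair has positive transition probability. $\pi(\mathcal B)=\sum_{y\in\mathcal B}\pi(y)$. *)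

(* Defs.v *)
From HB Require Import structures.
From mathcomp Require Import all_boot all_order all_algebra.
From mathcomp Require Import all_classical all_reals.
From mathcomp Require Import ereal topology normedtype sequences.
Set Implicit Arguments. Unset Strict Implicit. Unset Printing Implicit Defensive.
Import Order.TTheory GRing.Theory Num.Theory.
Local Open Scope ring_scope.

Section MarkovDefs.
Variables (R : realType) (T : finType).
Implicit Types (P : T -> T -> R) (x y : T) (A : {set T}).

Definition stochastic P :=
  (forall x y, 0 <= P x y) /\ (forall x, \sum_(y : T) P x y = 1).

Definition trajprob P (x0 : T) (n : nat) (w : n.+1.-tuple T) : R :=
  (thead w == x0)%:R * \prod_(i < n) P (nth x0 w i) (nth x0 w i.+1).

Definition PrTraj P (x0 : T) (n : nat) (E : pred (n.+1.-tuple T)) : R :=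
  \sum_(w : n.+1.-tuple T | E w) trajprob P x0 w.

Definition nstep P (n : nat) x y : R :=
  PrTraj P x (fun w : n.+1.-tuple T => tnth w ord_max == y).

Definition irreducible P := forall x y, exists n, 0 < nstep P n x y.

(* gcd of the return times {n >= 1 : P^n(x,x) > 0} equals 1 for each x. *)
Definition aperiodic P :=
  forall x (d : nat),
    (forall n, (0 < n)%N -> 0 < nstep P n x x -> (d %| n)%N) -> d = 1%N.

Definition stationary_distribution P (pi : T -> R) :=
  (forall x, 0 <= pi x) /\ \sum_(x : T) pi x = 1 /\
  (forall y, \sum_(x : T) pi x * P x y = pi y).

Definition measure_set (pi : T -> R) A : R := \sum_(y in A) pi y.

(* P{tau_A > n | X_0 = x0} = P{X_0,...,X_n all outside A}. *)
Definition Pr_tau_gt P x0 A (n : nat) : R :=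
  PrTraj P x0 (fun w : n.+1.-tuple T => all (fun z => z \notin A) w).

(* P{tau_x = n < tau_A | X_0 = x0}: X_n = x, X_0..X_{n-1} <> x,
   and X_0..X_n all outside A. *)
Definition Pr_hit_before_at P x0 x A (n : nat) : R :=
  PrTraj P x0 (fun w : n.+1.-tuple T =>
    [&& tnth w ord_max == x, x \notin take n w
      & all (fun z => z \notin A) w]).

Definition Pr_hit_before P x0 x A : \bar R :=
  (\sum_(n <oo) (Pr_hit_before_at P x0 x A n)%:E)%E.

(* E{tau_A | X_0 = x0} = sum_{n >= 0} P{tau_A > n}  (value in [0, +oo]). *)
Definition E_tau P x0 A : \bar R :=
  (\sum_(n <oo) (Pr_tau_gt P x0 A n)%:E)%E.

Definition separates P x (C B : {set T}) :=
  forall s : seq T, path (fun a b => 0 < P a b) x s ->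
    last x s \in C -> has (fun z => z \in B) (x :: s).

End MarkovDefs.

(* Main.v *)
Require Import Defs.
From HB Require Import structures.
From mathcomp Require Import all_boot all_order all_algebra.
From mathcomp Require Import all_classical all_reals.
From mathcomp Require Import ereal topology normedtype sequences.
From mathcomp Require Import lra.
Import Order.TTheory GRing.Theory Num.Theory.
Local Open Scope ring_scope.
Set Implicit Arguments. Unset Strict Implicit. Unset Printing Implicit Defensive.
Import numFieldNormedType.Exports.
Lemma first_step (R : realType) (T : finType) (P : T -> T -> R) (y : T) (n : nat)
  (E : pred (n.+2.-tuple T)) :
  PrTraj P y E = \sum_(z : T) P y z * PrTraj P z (fun w : n.+1.-tuple T => E (cons_tuple y w)).
Proof.
rewrite /PrTraj big_mkcond /=.
rewrite (reindex (fun p : T * n.+1.-tuple T => cons_tuple p.1 p.2)) /=; last first.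
  apply: onW_bij; exists (fun w : n.+2.-tuple T => (thead w, behead_tuple w)).
    by case=> a w /=; congr pair; apply: val_inj.
  by move=> w /=; rewrite [RHS]tuple_eta; apply: val_inj.
rewrite -(pair_big xpredT xpredT (fun a w => if E (cons_tuple a w) then trajprob P y (cons_tuple a w) else 0)) /=.
rewrite (bigD1 y) //= [X in _ + X]big1 ?addr0; last first.
  move=> a ay; apply: big1 => w _; case: ifP => // _.
  by rewrite /trajprob /= (negbTE ay) mul0r.
under [RHS]eq_bigr => z _ do rewrite /PrTraj big_mkcond mulr_sumr.
rewrite exchange_big /=; apply: eq_bigr => w _.
case: ifP => Ew; last by rewrite big1 // => z _; rewrite mulr0.
rewrite (bigD1 (thead w)) //= big1 ?addr0; last first.
  by move=> z zw; rewrite /trajprob eq_sym (negbTE zw) mul0r mulr0.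
rewrite /trajprob /=.
have -> : thead (cons_tuple y w) = y by [].
rewrite !eqxx !mul1r big_ord_recl /=.
congr (_ * _).
  by rewrite /thead (tnth_nth y).
apply: eq_bigr => i _; rewrite /bump /= add1n.
have hi : (i < size w)%N by rewrite size_tuple ltnW // ltnS.
have hi1 : (i.+1 < size w)%N by rewrite size_tuple ltnS.
by rewrite (set_nth_default (thead w) y hi) (set_nth_default (thead w) y hi1).
Qed.
Lemma PrTraj_ext (R : realType) (T : finType) (P : T -> T -> R) (y : T) (n : nat)
  (E E' : pred (n.+1.-tuple T)) : E =1 E' -> PrTraj P y E = PrTraj P y E'.
Proof. by move=> EE; apply: eq_bigl. Qed.

Lemma PrTraj_andb (R : realType) (T : finType) (P : T -> T -> R) (y : T) (n : nat)
  (b : bool) (E : pred (n.+1.-tuple T)) :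
  PrTraj P y (fun w => b && E w) = b%:R * PrTraj P y E.
Proof.
case: b; first by rewrite mul1r.
by rewrite mul0r /PrTraj big_pred0.
Qed.

Lemma PrTraj0 (R : realType) (T : finType) (P : T -> T -> R) (y : T)
  (E : pred (1.-tuple T)) : PrTraj P y E = (E [tuple y])%:R.
Proof.
rewrite /PrTraj big_mkcond /=.
rewrite (reindex (fun a : T => [tuple a])) /=; last first.
  apply: onW_bij; exists (fun w : 1.-tuple T => thead w) => //.
  move=> w /=; rewrite [RHS]tuple_eta; apply: val_inj => /=.
  by rewrite (@size0nil _ (behead w)) // size_behead size_tuple.
rewrite (bigD1 y) //= [X in _ + X]big1 ?addr0; last first.
  by move=> a ay; case: ifP => // _; rewrite /trajprob /= (negbTE ay) mul0r.
rewrite /trajprob big_ord0 mulr1.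
have -> : thead [tuple y] = y by [].
by case: ifP => _; rewrite ?(introT eqP (erefl y)).
Qed.

Lemma tau_gt0 (R : realType) (T : finType) (P : T -> T -> R) (y : T) A :
  Pr_tau_gt P y A 0 = (y \notin A)%:R.
Proof. by rewrite /Pr_tau_gt PrTraj0 /= andbT. Qed.

Lemma tau_gtS (R : realType) (T : finType) (P : T -> T -> R) (y : T) A n :
  Pr_tau_gt P y A n.+1 = (y \notin A)%:R * \sum_z P y z * Pr_tau_gt P z A n.
Proof.
rewrite /Pr_tau_gt first_step mulr_sumr; apply: eq_bigr => z _.
by rewrite PrTraj_andb mulrCA.
Qed.

Lemma hit0 (R : realType) (T : finType) (P : T -> T -> R) (y x : T) A :
  Pr_hit_before_at P y x A 0 = ((y == x) && (y \notin A))%:R.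
Proof. by rewrite /Pr_hit_before_at PrTraj0 /= andbT. Qed.

Lemma hitS (R : realType) (T : finType) (P : T -> T -> R) (y x : T) A n :
  Pr_hit_before_at P y x A n.+1 =
  ((y != x) && (y \notin A))%:R * \sum_z P y z * Pr_hit_before_at P z x A n.
Proof.
rewrite /Pr_hit_before_at first_step mulr_sumr; apply: eq_bigr => z _.
rewrite mulrCA -PrTraj_andb; congr (_ * _); apply: PrTraj_ext => w /=.
have -> : tnth (cons_tuple y w) ord_max = tnth w ord_max.
  by rewrite !(tnth_nth y).
rewrite in_cons.
rewrite (eq_sym x y).
by case: (y == x); case: (y \in A); case: (tnth w ord_max == x); case: (x \in take n w); case: all.
Qed.
Lemma PrTraj_ge0 (R : realType) (T : finType) (P : T -> T -> R) (y : T) (n : nat)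
  (E : pred (n.+1.-tuple T)) : stochastic P -> 0 <= PrTraj P y E.
Proof.
move=> [P0 _]; apply: sumr_ge0 => w _; apply: mulr_ge0; first by rewrite ler0n.
by apply: prodr_ge0 => i _; apply: P0.
Qed.

Definition hsum (R : realType) (T : finType) (P : T -> T -> R) (x : T) (A : {set T})
  (N : nat) (y : T) : R := \sum_(0 <= n < N) Pr_hit_before_at P y x A n.

Lemma hsum0 (R : realType) (T : finType) (P : T -> T -> R) x A y : hsum P x A 0 y = 0.
Proof. by rewrite /hsum big_geq. Qed.

Lemma hsumS (R : realType) (T : finType) (P : T -> T -> R) x A N y :
  hsum P x A N.+1 y = (y \notin A)%:R *
    ((y == x)%:R + (y != x)%:R * \sum_z P y z * hsum P x A N z).
Proof.
rewrite /hsum big_nat_recl // hit0.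
under eq_bigr => n _ do rewrite hitS.
rewrite -mulr_sumr.
under [in RHS]eq_bigr => z _ do rewrite mulr_sumr.
rewrite [in RHS]exchange_big /=.
case: (y == x); case: (y \in A); rewrite /= ?mul0r ?mul1r ?add0r ?addr0 ?mulr0 ?mulr1 //.
Qed.

Lemma hsum_ge0 (R : realType) (T : finType) (P : T -> T -> R) x A N y :
  stochastic P -> 0 <= hsum P x A N y.
Proof. by move=> sP; apply: sumr_ge0 => n _; apply: PrTraj_ge0. Qed.

Lemma hsum_le1 (R : realType) (T : finType) (P : T -> T -> R) x A N y :
  stochastic P -> hsum P x A N y <= 1.
Proof.
move=> sP; elim: N y => [|N IH] y; first by rewrite hsum0.
rewrite hsumS; case: (y \in A); rewrite /= ?mul0r // mul1r.
case: (y == x); rewrite /= ?mul0r ?addr0 ?mul1r ?add0r //.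
case: sP => P0 P1; rewrite -(P1 y); apply: ler_sum => z _.
by rewrite -[X in _ <= X]mulr1 ler_wpM2l.
Qed.

Lemma hsum_nd (R : realType) (T : finType) (P : T -> T -> R) x A y :
  stochastic P -> nondecreasing_seq (fun N => hsum P x A N y).
Proof.
move=> sP; apply/nondecreasing_seqP => N.
by rewrite /hsum big_nat_recr //= lerDl; apply: PrTraj_ge0.
Qed.

Lemma hsum_cvg (R : realType) (T : finType) (P : T -> T -> R) x A y :
  stochastic P -> cvgn (fun N => hsum P x A N y).
Proof.
move=> sP; apply: nondecreasing_is_cvgn; first exact: hsum_nd.
by exists 1 => _ [N _ <-]; apply: hsum_le1.
Qed.

Definition ulim (R : realType) (T : finType) (P : T -> T -> R) x A y : R :=
  limn (fun N => hsum P x A N y).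

Lemma ulim_ge (R : realType) (T : finType) (P : T -> T -> R) x A y N :
  stochastic P -> hsum P x A N y <= ulim P x A y.
Proof. by move=> sP; apply: nondecreasing_cvgn_le; [apply: hsum_nd|apply: hsum_cvg]. Qed.

Lemma ulim_le (R : realType) (T : finType) (P : T -> T -> R) x A y b :
  stochastic P -> (forall N, hsum P x A N y <= b) -> ulim P x A y <= b.
Proof.
by move=> sP hb; apply: limr_le; [apply: hsum_cvg | apply: nearW].
Qed.
Lemma archi_le0 (R : realType) (d b : R) : (forall M : nat, M%:R * d <= b) -> d <= 0.
Proof.
move=> H; rewrite leNgt; apply/negP => d0.
have b0 : 0 <= b by have := H 0%N; rewrite mul0r.
have := H (Num.trunc (b / d)).+1.
have := truncnS_gt (b / d); rewrite -(ler_pdivlMr _ _ d0) => h1 h2.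
by have := le_lt_trans h2 h1; rewrite ltxx.
Qed.

Lemma lyap (R : realType) (T : finType) (P : T -> T -> R) (x : T) (C : {set T})
  (u : T -> R) (K : R) :
  stochastic P -> 0 <= K ->
  (forall y, u y <= 1) -> (forall y, y \in C -> u y <= 0) ->
  (forall y, y \notin C -> y != x -> u y <= \sum_z P y z * u z) ->
  K * (1 - \sum_z P x z * u z) <= 1 ->
  forall N y, K * u y <= \sum_(0 <= n < N) Pr_tau_gt P y C n + K * Pr_tau_gt P y C N.
Proof.
move=> [P0 P1] K0 u1 uC uh ux; elim=> [|N IH] y.
  rewrite big_geq // add0r tau_gt0.
  case: (boolP (y \in C)) => yC /=; first by rewrite mulr0; apply: mulr_ge0_le0 => //; apply: uC.
  by rewrite mulr1 -[X in _ <= X]mulr1 ler_wpM2l.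
case: (boolP (y \in C)) => yC.
  have g0 n : Pr_tau_gt P y C n = 0 by case: n => [|n]; rewrite ?tau_gt0 ?tau_gtS yC /= ?mul0r.
  rewrite g0 mulr0 addr0 big1 => [|n _]; last exact: g0.
  by apply: mulr_ge0_le0 => //; apply: uC.
rewrite big_nat_recl // tau_gt0 yC /= -addrA.
under eq_bigr => n _ do rewrite tau_gtS yC /= mul1r.
rewrite tau_gtS yC /= mul1r.
have -> : \sum_(0 <= i < N) \sum_z P y z * Pr_tau_gt P z C i + K * \sum_z P y z * Pr_tau_gt P z C N
   = \sum_z P y z * (\sum_(0 <= i < N) Pr_tau_gt P z C i + K * Pr_tau_gt P z C N).
  rewrite exchange_big /= mulr_sumr -big_split /=; apply: eq_bigr => z _.
  by rewrite mulrDr -mulr_sumr mulrCA.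
have step : K * \sum_z P y z * u z <= \sum_z P y z * (\sum_(0 <= i < N) Pr_tau_gt P z C i + K * Pr_tau_gt P z C N).
  rewrite mulr_sumr; apply: ler_sum => z _.
  by rewrite mulrCA; apply: ler_wpM2l => //; apply: IH.
case: (eqVneq y x) => [eyx|yx].
  subst y.
  apply: (le_trans _ (lerD (lexx 1) step)).
  have h1 := ler_wpM2l K0 (u1 x); rewrite mulr1 in h1.
  rewrite mulrBr mulr1 in ux; lra.
apply: (le_trans _ (lerD (lexx 1) step)).
apply: (le_trans (ler_wpM2l K0 (uh y yC yx))).
by rewrite lerDr.
Qed.
Definition reachB (R : realType) (T : finType) (P : T -> T -> R) (x : T) (B : {set T}) (y : T) :=
  exists s, [/\ path (fun a b => 0 < P a b) x s, last x s = y & all (fun z => z \notin B) (x :: s)].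

Lemma reach_notB (R : realType) (T : finType) (P : T -> T -> R) x (B : {set T}) y :
  reachB P x B y -> y \notin B.
Proof. by case=> s [_ <- /allP]; apply; apply: mem_last. Qed.

Lemma reach_notC (R : realType) (T : finType) (P : T -> T -> R) x (B C : {set T}) y :
  separates P x C B -> reachB P x B y -> y \notin C.
Proof.
move=> sep [s [ps ls al]]; apply/negP => yC.
have := sep s ps; rewrite ls => /(_ yC) /hasP [z zin zB].
by move/allP: al => /(_ z zin); rewrite zB.
Qed.

Lemma reach_step (R : realType) (T : finType) (P : T -> T -> R) x (B : {set T}) y z :
  reachB P x B y -> 0 < P y z -> z \notin B -> reachB P x B z.
Proof.
move=> [s [ps ls al]] Pyz zB; exists (rcons s z); split.
- by rewrite rcons_path ps ls.
- by rewrite last_rcons.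
- by move: al => /= /andP [-> als]; rewrite all_rcons zB als.
Qed.

Lemma reach_x (R : realType) (T : finType) (P : T -> T -> R) x (B : {set T}) :
  x \notin B -> reachB P x B x.
Proof. by move=> xB; exists [::]; split => //=; rewrite xB. Qed.

Lemma hsum_inA (R : realType) (T : finType) (P : T -> T -> R) x (A : {set T}) N y :
  y \in A -> hsum P x A N y = 0.
Proof. by case: N => [|N] yA; rewrite ?hsum0 // hsumS yA mul0r. Qed.

Lemma cmp_sum (R : realType) (T : finType) (P : T -> T -> R) x (B C : {set T}) N y :
  stochastic P -> reachB P x B y ->
  (forall z, reachB P x B z -> hsum P x B N z <= hsum P x C N z) ->
  \sum_z P y z * hsum P x B N z <= \sum_z P y z * hsum P x C N z.
Proof.
move=> sP ry IH; apply: ler_sum => z _.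
have P0 := sP.1 y z.
case: (boolP (0 < P y z)) => Pyz; last first.
  have -> : P y z = 0 by apply/eqP; rewrite eq_le P0 andbT leNgt.
  by rewrite !mul0r.
apply: ler_wpM2l => //.
case: (boolP (z \in B)) => zB.
  by rewrite hsum_inA //; apply: hsum_ge0.
by apply: IH; apply: reach_step Pyz zB.
Qed.

Lemma cmp (R : realType) (T : finType) (P : T -> T -> R) x (B C : {set T}) N :
  stochastic P -> separates P x C B ->
  forall z, reachB P x B z -> hsum P x B N z <= hsum P x C N z.
Proof.
move=> sP sep; elim: N => [|N IH] z rz; first by rewrite !hsum0.
rewrite !hsumS (reach_notB rz) (reach_notC sep rz) /= !mul1r.
apply: lerD => //; case: (z == x) => /=; rewrite ?mul0r // !mul1r.
exact: cmp_sum.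
Qed.

Lemma kac_step (R : realType) (T : finType) (P : T -> T -> R) (pi : T -> R) x (B : {set T}) N :
  stochastic P -> stationary_distribution P pi -> x \notin B ->
  pi x * (1 - \sum_z P x z * hsum P x B N z) <=
  \sum_w pi w * hsum P x B N.+1 w - \sum_w pi w * hsum P x B N w + measure_set pi B.
Proof.
move=> sP [pi0 [_ pist]] xB.
set a := hsum P x B N.
have e1 : \sum_w pi w * a w = \sum_w pi w * \sum_z P w z * a z.
  under [RHS]eq_bigr => w _ do rewrite mulr_sumr.
  rewrite exchange_big /=; apply: eq_bigr => z _.
  by rewrite -pist mulr_suml; apply: eq_bigr => w _; rewrite mulrA.
have pt w : pi w * \sum_z P w z * a z - pi w * hsum P x B N.+1 w <=
    (if w \in B then pi w else 0) - (if w == x then pi x * (1 - \sum_z P x z * a z) else 0).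
  rewrite hsumS; case: (boolP (w \in B)) => wB /=.
    have wx : w != x by apply: contraNneq xB => <-.
    rewrite (negbTE wx) mul0r mulr0 !subr0 -[X in _ <= X]mulr1; apply: ler_wpM2l => //.
    case: sP => P0 P1; rewrite -(P1 w); apply: ler_sum => z _.
    by rewrite -[X in _ <= X]mulr1; apply: ler_wpM2l => //; apply: hsum_le1.
  case: (eqVneq w x) => [->|wx] /=; rewrite ?mul1r ?mul0r ?add0r ?addr0 ?mulr1.
    by rewrite mulrBr mulr1 opprB.
  by rewrite subrr oppr0.
set E := pi x * _.
have s1 : \sum_w (if w \in B then pi w else 0) = measure_set pi B.
  by rewrite /measure_set [RHS]big_mkcond.
have s2 : \sum_w (if w == x then E else 0) = E by rewrite -big_mkcond big_pred1_eq.
have := ler_sum (index_enum T) (fun w (_ : true) => pt w).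
rewrite !sumrB -e1 s1 s2.
set S0 := \sum_w pi w * a w; set S1 := \sum_w pi w * hsum P x B N.+1 w.
set M := measure_set pi B.
by move=> h; lra.
Qed.
Lemma kac (R : realType) (T : finType) (P : T -> T -> R) (pi : T -> R) x (B C : {set T}) :
  stochastic P -> stationary_distribution P pi -> separates P x C B -> x \notin B ->
  pi x * (1 - \sum_z P x z * ulim P x C z) <= measure_set pi B.
Proof.
move=> sP st sep xB.
have [pi0 [pi1 _]] := st.
set S := fun N => \sum_w pi w * hsum P x B N w.
set d := pi x * (1 - \sum_z P x z * ulim P x C z) - measure_set pi B.
have hd N : d <= S N.+1 - S N.
  have k := kac_step N sP st xB.
  have : \sum_z P x z * hsum P x B N z <= \sum_z P x z * ulim P x C z.
    apply: (le_trans (cmp_sum (N:=N) sP (reach_x P xB) (cmp N sP sep))).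
    apply: ler_sum => z _; apply: ler_wpM2l; first exact: sP.1.
    exact: ulim_ge.
  move=> h.
  have : pi x * (1 - \sum_z P x z * ulim P x C z) <= pi x * (1 - \sum_z P x z * hsum P x B N z).
    by apply: ler_wpM2l => //; rewrite lerD2l lerN2.
  rewrite /d /S; lra.
have S0 : S 0%N = 0 by rewrite /S big1 // => w _; rewrite hsum0 mulr0.
have S1 N : S N <= 1.
  rewrite /S -pi1; apply: ler_sum => w _.
  by rewrite -[X in _ <= X]mulr1; apply: ler_wpM2l => //; apply: hsum_le1.
have hM M : M%:R * d <= S M.
  elim: M => [|M IH]; first by rewrite mul0r S0.
  rewrite -natr1 mulrDl mul1r; have := hd M; lra.
have := archi_le0 (fun M => le_trans (hM M) (S1 M)).
rewrite /d; lra.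
Qed.

Lemma ereal_final (R : realType) (g : nat -> R) (K L : R) :
  (forall n, 0 <= g n) -> 0 <= K ->
  (forall N, L <= \sum_(0 <= n < N) g n + K * g N) ->
  (L%:E <= \sum_(n <oo) (g n)%:E)%E.
Proof.
move=> g0 K0 hL.
have ge0 : forall n, (0 <= n)%N -> xpredT n -> (0 <= (g n)%:E)%E.
  by move=> n _ _; rewrite lee_fin.
case E: (\sum_(n <oo) (g n)%:E)%E => [r| |]; last 2 first.
- exact: leey.
- by have := nneseries_ge0 ge0; rewrite E.
have Gr N : \sum_(0 <= n < N) g n <= r.
  have := nneseries_lim_ge N ge0; rewrite E sumEFin lee_fin.
  by [].
set G := fun N => \sum_(0 <= n < N) g n.
have GS N : G N.+1 = G N + g N by rewrite /G big_nat_recr.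
have hM M : M%:R * L <= M%:R * r + K * G M.
  elim: M => [|M IH]; first by rewrite !mul0r add0r /G big_geq // mulr0.
  rewrite -natr1 !mulrDl !mul1r GS mulrDr.
  have h3 : K * G M <= K * r.
    by apply: ler_wpM2l => //; apply: Gr.
  have h1 := hL M; have h2 := Gr M.
  rewrite /G in IH h3 *; lra.
have hd M : M%:R * (L - r) <= K * r.
  have := hM M; have h3 : K * G M <= K * r.
    by apply: ler_wpM2l => //; apply: Gr.
  rewrite /G in h3 * => h4; rewrite mulrBr; lra.
have := archi_le0 hd; rewrite lee_fin; lra.
Qed.
Theorem propositionI1 (R : realType) (T : finType) (P : T -> T -> R)
    (pi : T -> R) (x x0 : T) (C B : {set T}) (c : R) :
  stochastic P -> irreducible P -> aperiodic P ->
  stationary_distribution P pi ->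
  (c%:E <= Pr_hit_before P x0 x C)%E ->
  separates P x C B ->
  ((c * pi x / measure_set pi B)%:E <= E_tau P x0 C)%E.
Proof.
move=> sP _ _ st hc sep.
have [pi0 _] := st.
set u := ulim P x C.
set M := measure_set pi B.
set K := pi x / M.
have M0 : 0 <= M by apply: sumr_ge0 => y _; apply: pi0.
have K0 : 0 <= K by apply: divr_ge0.
have u1 y : u y <= 1 by apply: ulim_le => // N; apply: hsum_le1.
have u0 y : 0 <= u y by apply: le_trans (ulim_ge x C y 0 sP); rewrite hsum0.
have uC y : y \in C -> u y <= 0 by move=> yC; apply: ulim_le => // N; rewrite hsum_inA.
have uh y : y \notin C -> y != x -> u y <= \sum_z P y z * u z.
  move=> yC yx; apply: ulim_le => // N.
  apply: (le_trans (hsum_nd x C y sP (leqnSn N))).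
  rewrite hsumS yC (negbTE yx) /= mul1r add0r mul1r.
  apply: ler_sum => z _; apply: ler_wpM2l; first exact: sP.1.
  exact: ulim_ge.
have Pu0 : 0 <= \sum_z P x z * u z.
  by apply: sumr_ge0 => z _; apply: mulr_ge0 => //; apply: sP.1.
have kx : pi x * (1 - \sum_z P x z * u z) <= M.
  case: (boolP (x \in B)) => xB; last exact: kac.
  apply: (@le_trans _ _ (pi x)).
    by rewrite -[X in _ <= X]mulr1 ler_wpM2l // lerBlDr lerDl.
  rewrite /M /measure_set (bigD1 x) //= lerDl.
  by apply: sumr_ge0 => y _; apply: pi0.
have ux : K * (1 - \sum_z P x z * u z) <= 1.
  case: (eqVneq M 0) => [Me|Mn0]; first by rewrite /K Me invr0 mulr0 mul0r.
  have Mp : 0 < M by rewrite lt_def Mn0 M0.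
  by rewrite /K mulrAC ler_pdivrMr // mul1r.
have L := @lyap R T P x C u K sP K0 u1 uC uh ux.
have hu : Pr_hit_before P x0 x C = (u x0)%:E.
  rewrite /Pr_hit_before /u /ulim -EFin_lim; last exact: hsum_cvg.
  have -> : (fun n => \sum_(0 <= i < n) (Pr_hit_before_at P x0 x C i)%:E) = EFin \o (hsum P x C)^~ x0.
    by apply: funext => n /=; rewrite sumEFin.
  by [].
have cu : c <= u x0 by move: hc; rewrite hu lee_fin.
rewrite /E_tau -mulrA -/K.
apply: (ereal_final (K := K)) => //.
  by move=> n; apply: PrTraj_ge0.
move=> N; apply: le_trans (L N x0).
by rewrite mulrC ler_wpM2l.
Qed.
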